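(* Let $\Omega \subseteq \mathbb{R}^n$ be open, let $F \in C^1(\Omega,\mathbb{R}^n)$, and fix a vector norm $\|\cdot\|$ on $\mathbb{R}^n$ together with its induced matrix norm. Assume there are nonnegative numbers $K, L, M$ such that for all $x, y \in \Omega$, $F'(x)$ is nonsingular and \[ \|F'(x)^{-1}\| \le K, \qquad \|F'(x)-F'(y)\| \le L\|x-y\|, \qquad \|F'(x)\| \le M. \] Let $z \in \Omega$ satisfy $F(z)=0$. Define $g(x) = x - F'(x)^{-1}F(x)$ for $x \in \Omega$. Let $x_k \in \Omega$ be such that the line segment $\{t x_k + (1-t) z : t\in[0,1]\}$ is contained in $\Omega$, let $D_k \in \mathbb{R}^{n\times n}$ be a diagonal matrix and $E_k \in \mathbb{R}^{n\times n}$ any matrix, and define \[ x_{k+1} = (I + D_k)\Big( g(x_k) - E_k F'(x_k)^{-1}F(x_k) \Big). \] Then \[ x_{k+1} - z = g(x_k) - z - E_kF'(x_k)^{-1}F(x_k) + D_k\big[ g(x_k) - E_kF'(x_k)^{-1}F(x_k)\big] \] and \[ \|x_{k+1}-z\| \le \tfrac12 LK\|x_k-z\|^2 + \|E_k\|KM\|x_k-z\| + \|D_k\|\Big( \|z\| + \tfrac12 LK\|x_k-z\|^2 + \|E_k\|KM\|x_k-z\| \Big). \]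
   Context: $F'$ denotes the Jacobian of $F$ and $I$ the $n\times n$ identity matrix. The iteration models a quasi-Newton method in finite precision: $D_k$ represents rounding error in the subtraction and $E_k$ represents the relative discrepancy between the computed correction and the exact Newton correction $F'(x_k)^{-1}F(x_k)$. *)

(* Defs.v *)
From HB Require Import structures.
From mathcomp Require Import all_boot all_order all_algebra.
From mathcomp Require Import all_classical all_reals all_analysis.
Set Implicit Arguments. Unset Strict Implicit. Unset Printing Implicit Defensive.
Import Order.TTheory GRing.Theory Num.Theory.
Import numFieldNormedType.Exports.
Local Open Scope classical_set_scope.
Local Open Scope ring_scope.

Definition is_vector_norm (R : realType) (n : nat) (nv : 'cV[R]_n -> R) : Prop :=
  [/\ forall x, 0 <= nv x,
      forall x, nv x = 0 -> x = 0,
      forall (a : R) x, nv (a *: x) = `|a| * nv x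
    & forall x y, nv (x + y) <= nv x + nv y].

Definition induced_norm (R : realType) (n : nat) (nv : 'cV[R]_n -> R)
  (A : 'M[R]_n) : R :=
  sup [set nv (A *m x) | x in [set x : 'cV[R]_n | nv x <= 1]].

Definition has_jacobian (R : realType) (n : nat) (F : 'cV[R]_n -> 'cV[R]_n)
  (J : 'M[R]_n) (x : 'cV[R]_n) : Prop :=
  differentiable F x /\ forall h, 'd F x h = J *m h.

(* Main.v *)
Require Import Defs.
From HB Require Import structures.
From mathcomp Require Import all_boot all_order all_algebra.
From mathcomp Require Import all_classical all_reals all_analysis.
Import Order.TTheory GRing.Theory Num.Theory.
Import numFieldNormedType.Exports.
Local Open Scope classical_set_scope.
Local Open Scope ring_scope.
From mathcomp Require Import ring lra.
Set Implicit Arguments.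

Lemma diff_approx (R : realType) n (F : 'cV[R]_n -> 'cV[R]_n) x :
  differentiable F x -> forall e : R, 0 < e -> exists2 d : R, 0 < d &
  forall h, `|h| < d -> `|F (x + h) - F x - 'd F x h| <= e * `|h|.
Proof.
move=> /diff_locally /eqaddoP H e e0.
have := H e e0.
move=> /nbhs_ballP [d d0 Hd]; exists d => // h hd.
have := Hd h.
move=> /(_ _).
rewrite -ball_normE /ball_ /= sub0r normrN => /(_ hd).
by rewrite /shift /= !fctE [h + x]addrC opprD addrA.
Qed.

Lemma mx_entry_le (R : realType) m p (A : 'M[R]_(m, p)) i j : `|A i j| <= `|A|.
Proof.
rewrite [leRHS]/Num.Def.normr /= mx_normrE; apply/bigmax_geP; right => /=.
by exists (i, j).
Qed.

Lemma mx_le_entry (R : realType) m p (A : 'M[R]_(m, p)) (c : R) :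
  0 <= c -> (forall i j, `|A i j| <= c) -> `|A| <= c.
Proof.
move=> c0 H; rewrite [leLHS]/Num.Def.normr /= mx_normrE.
by apply: bigmax_le => // -[i j] _; exact: H.
Qed.

Lemma mx_normT (R : realType) m p (A : 'M[R]_(m, p)) : `|A^T| = `|A|.
Proof.
apply/le_anti/andP; split; apply: mx_le_entry => // i j; rewrite ?mxE;
  [exact (@mx_entry_le R _ _ A j i) | have := @mx_entry_le R _ _ A^T j i; rewrite mxE; exact].
Qed.

Section NV.
Variables (R : realType) (n : nat) (nv : 'cV[R]_n -> R).
Hypothesis Hnv : is_vector_norm nv.

Lemma nv_ge0 x : 0 <= nv x. Proof. by case: Hnv. Qed.
Lemma nv_eq0 x : nv x = 0 -> x = 0. Proof. by case: Hnv => _ H _ _; exact: H. Qed.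
Lemma nvZ a x : nv (a *: x) = `|a| * nv x. Proof. by case: Hnv. Qed.
Lemma nvD x y : nv (x + y) <= nv x + nv y. Proof. by case: Hnv. Qed.
Lemma nv0 : nv 0 = 0.
Proof. by rewrite -(scale0r (0 : 'cV[R]_n)) nvZ normr0 mul0r. Qed.
Lemma nvN x : nv (- x) = nv x.
Proof. by rewrite -scaleN1r nvZ normrN normr1 mul1r. Qed.
Lemma nvB x y : nv (x - y) <= nv x + nv y.
Proof. by rewrite -(nvN y); exact: nvD. Qed.

Lemma nv_sum (I : Type) (r : seq I) (P : pred I) (f : I -> 'cV[R]_n) :
  nv (\sum_(i <- r | P i) f i) <= \sum_(i <- r | P i) nv (f i).
Proof.
elim/big_rec2: _ => [|i y1 y2 _ H]; first by rewrite nv0.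
exact: le_trans (nvD _ _) (lerD (lexx _) H).
Qed.

Lemma cV_sum_delta (y : 'cV[R]_n) : y = \sum_j y j ord0 *: delta_mx j ord0.
Proof.
apply/matrixP => i k; rewrite (ord1 k) summxE (bigD1 i) //= big1 ?addr0.
  by rewrite !mxE !eqxx mulr1.
by move=> j /negbTE ji; rewrite !mxE eq_sym ji mulr0.
Qed.

Lemma nv_mul_le (A : 'M[R]_n) y :
  nv (A *m y) <= (\sum_j nv (A *m delta_mx j ord0)) * `|y|.
Proof.
rewrite {1}(cV_sum_delta y) mulmx_sumr mulr_suml.
apply: le_trans (nv_sum _ _ _) _; apply: ler_sum => j _.
rewrite -scalemxAr nvZ mulrC ler_wpM2l ?nv_ge0 //.
exact: mx_entry_le.
Qed.

Definition Cn := \sum_(j < n) nv (delta_mx j ord0).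

Lemma Cn_ge0 : 0 <= Cn.
Proof. by apply: sumr_ge0 => j _; exact: nv_ge0. Qed.

Lemma nv_le_C y : nv y <= Cn * `|y|.
Proof.
have := nv_mul_le 1%:M y; rewrite mul1mx.
by under eq_bigr do rewrite mul1mx.
Qed.

Lemma nv_lip x y : `|nv x - nv y| <= Cn * `|x - y|.
Proof.
apply: le_trans (nv_le_C (x - y)).
rewrite ler_norml; apply/andP; split.
  have := nvD (y - x) x; rewrite subrK -(nvN (y - x)) opprB; lra.
have := nvD (x - y) y; rewrite subrK; lra.
Qed.

Lemma nv_lower : exists2 c : R, 0 < c & forall x, `|x| <= c * nv x.
Proof.
case: (pselect (exists x : 'cV[R]_n, x != 0)) => [[x0 x0n0]|H]; last first.
  exists 1 => // x; have -> : x = 0.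
    by apply/eqP; apply: contra_notT H => h; exists x.
  by rewrite normr0 nv0 mulr0.
pose S := [set v : 'rV[R]_n | `|v| = 1].
pose f := fun v : 'rV[R]_n => nv v^T.
have cS : compact S.
  apply: bounded_closed_compact.
    exists 1; split; first by rewrite num_real.
    by move=> M M1 v Sv /=; rewrite Sv; exact: ltW.
  apply: (@closed_comp _ _ (@Num.Def.normr R 'rV[R]_n) [set 1]).
    by move=> v _; exact: norm_continuous.
  exact: closed_eq.
have S0 : S !=set0.
  exists (`|x0|^-1 *: x0^T); rewrite /S /= normrZ mx_normT normrV ?unitfE ?normr_eq0 //.
  by rewrite normr_id mulVf // normr_eq0.
have fc : {within S, continuous f}.
  apply: continuous_subspaceT => v.
  move=> A /= /nbhs_ballP[e e0 He]; apply/nbhs_ballP.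
  have C1 : 0 < Cn + 1 by rewrite ltr_wpDl ?Cn_ge0.
  exists (e / (Cn + 1)); first by rewrite /= divr_gt0.
  move=> w; rewrite -ball_normE /= => hw; apply: He.
  rewrite -ball_normE /=.
  apply: le_lt_trans (nv_lip _ _) _.
  rewrite -linearB mx_normT.
  apply: (@le_lt_trans _ _ (Cn * (e / (Cn + 1)))).
    by rewrite ler_wpM2l ?Cn_ge0 // ltW.
  rewrite mulrA ltr_pdivrMr //; move: e0 => /= e0; have := Cn_ge0; nra.
have [c cS' minf] := compact_EVT_min S0 cS fc.
have Sc : `|c| = 1 by move: cS'; rewrite inE.
have fc0 : 0 < f c.
  rewrite lt_def nv_ge0 andbT; apply/eqP => /nv_eq0 /(congr1 trmx).
  by rewrite trmxK trmx0 => c0; move: Sc; rewrite c0 normr0 => /eqP; rewrite eq_sym oner_eq0.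
exists (f c)^-1; first by rewrite invr_gt0.
move=> x; have [->|xn0] := eqVneq x 0; first by rewrite normr0 nv0 mulr0.
have xp : 0 < `|x| by rewrite normr_gt0.
have Sv : (`|x|^-1 *: x^T) \in S.
  rewrite inE /S /= normrZ mx_normT normrV ?unitfE ?normr_eq0 //.
  by rewrite normr_id mulVf // normr_eq0.
have := minf _ Sv; rewrite /f.
have -> : (`|x|^-1 *: x^T)^T = `|x|^-1 *: x by apply/matrixP => i j; rewrite !mxE.
rewrite nvZ normrV ?unitfE ?normr_eq0 // normr_id => h.
rewrite -(ler_pM2l fc0) mulrA mulfV ?gt_eqF // mul1r.
by rewrite -ler_pdivlMr // mulrC.
Qed.

Lemma ind_has_sup (A : 'M[R]_n) :
  has_sup [set nv (A *m x) | x in [set x | nv x <= 1]].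
Proof.
split; first by exists (nv (A *m 0)), 0 => //=; rewrite nv0.
have [c c0 Hc] := nv_lower.
pose SA := \sum_j nv (A *m delta_mx j ord0).
have SA0 : 0 <= SA by apply: sumr_ge0 => j _; exact: nv_ge0.
exists (SA * c) => _ [x /= hx <-].
apply: le_trans (nv_mul_le A x) _.
apply: le_trans (_ : SA * (c * nv x) <= _).
  by rewrite ler_wpM2l.
by rewrite ler_wpM2l // ler_piMr // ltW.
Qed.

Lemma ind_ge0 (A : 'M[R]_n) : 0 <= induced_norm nv A.
Proof.
apply: le_trans (sup_upper_bound (ind_has_sup A) _); last first.
  by exists 0; rewrite /= ?nv0 //.
by rewrite mulmx0 nv0.
Qed.

Lemma ind_le (A : 'M[R]_n) x : nv (A *m x) <= induced_norm nv A * nv x.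
Proof.
have [x0|xn0] := eqVneq (nv x) 0.
  by rewrite (nv_eq0 x0) mulmx0 nv0 mulr0.
have xp : 0 < nv x by rewrite lt_def xn0 nv_ge0.
have := sup_upper_bound (ind_has_sup A) (_ : _ (nv (A *m ((nv x)^-1 *: x)))).
rewrite -scalemxAr nvZ ger0_norm ?invr_ge0 ?nv_ge0 // => h.
rewrite -ler_pdivrMr // mulrC; apply: h.
exists ((nv x)^-1 *: x); last by rewrite -scalemxAr nvZ ger0_norm ?invr_ge0 ?nv_ge0.
by rewrite /= nvZ ger0_norm ?invr_ge0 ?nv_ge0 // mulVf.
Qed.

End NV.
Arguments Cn {R n} nv.

Lemma mvi (R : realType) (V : zmodType) (N : V -> R) (phi : R -> V) (psi : R -> R) :
  N 0 = 0 -> (forall a b, N (a + b) <= N a + N b) ->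
  (forall t : R, 0 <= t -> t < 1 -> forall e : R, 0 < e -> exists2 d : R, 0 < d &
      forall u : R, t < u -> u < t + d -> u <= 1 ->
        N (phi u - phi t) <= psi u - psi t + e * (u - t)) ->
  (forall t : R, 0 < t -> t <= 1 -> forall e : R, 0 < e -> exists2 d : R, 0 < d &
      forall u : R, t - d < u -> u < t -> 0 <= u ->
        N (phi t - phi u) <= psi t - psi u + e * (t - u)) ->
  N (phi 1 - phi 0) <= psi 1 - psi 0.
Proof.
move=> N0 ND Hr Hl.
apply/ler_addgt0Pr => e e0.
pose P u := N (phi u - phi 0) <= psi u - psi 0 + e * u.
have key a b c : N (phi c - phi a) <= N (phi c - phi b) + N (phi b - phi a).
  by have := ND (phi c - phi b) (phi b - phi a); rewrite addrA subrK.
have P0 : P 0 by rewrite /P subrr N0 subrr mulr0 addr0.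
pose S := [set t | 0 <= t <= 1 /\ forall u, 0 <= u <= t -> P u].
have S0 : S 0.
  split; first by rewrite lexx ler01.
  by move=> u /andP[u0 u0']; have -> : u = 0 by apply/le_anti; rewrite u0 u0'.
have hs : has_sup S.
  by split; [exists 0 | exists 1 => t [/andP[_ t1] _]].
set s := sup S.
have s0 : 0 <= s := sup_upper_bound hs S0.
have s1 : s <= 1 by apply: ge_sup; [exists 0 | move=> t [/andP[_ t1] _]].
have below u : 0 <= u -> u < s -> P u.
  move=> u0 us; have [t [_ Ht] ut] := @sup_adherent _ S (s - u) ltac:(by rewrite subr_gt0) hs.
  apply: Ht; rewrite u0 /=; move: ut; rewrite /s; lra.
have Ps : P s.
  have [sz|sn0] := eqVneq s 0; first by rewrite sz.
  have sp : 0 < s by rewrite lt_def sn0 s0.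
  have [d d0 Hd] := Hl s sp s1 e e0.
  pose m := Num.min s d.
  have m0 : 0 < m by rewrite lt_min sp d0.
  have ms : m <= s by rewrite ge_min lexx.
  have md : m <= d by rewrite ge_min lexx orbT.
  have u0 : 0 <= s - m / 2 by lra.
  have us : s - m / 2 < s by lra.
  have := Hd (s - m / 2) ltac:(lra) us u0.
  have := below _ u0 us; rewrite /P => h1 h2.
  have := key 0 (s - m / 2) s; lra.
have Pall u : 0 <= u <= s -> P u.
  move=> /andP[u0]; rewrite le_eqVlt => /orP[/eqP -> //|]; exact: below.
have s_eq : s = 1.
  apply/eqP; rewrite eq_le s1 /= leNgt; apply/negP => s1'.
  have [d d0 Hd] := Hr s s0 s1' e e0.
  pose t := Num.min (s + d / 2) 1.
  have t1 : t <= 1 by rewrite ge_min lexx orbT.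
  have t2 : t <= s + d / 2 by rewrite ge_min lexx.
  have st : s < t by rewrite lt_min s1' andbT; lra.
  have St : S t.
    split; first by rewrite t1 andbT; lra.
    move=> u /andP[u0 ut]; have [us|su] := leP u s; first by apply: Pall; rewrite u0.
    have := Hd u su ltac:(lra) ltac:(lra).
    have := Pall s ltac:(rewrite s0 lexx //); rewrite /P => h1 h2.
    have := key 0 s u; lra.
  have := sup_upper_bound hs St; rewrite -/s; lra.
by move: Ps; rewrite /P s_eq mulr1.
Qed.

Lemma line_approx (R : realType) n (nv : 'cV[R]_n -> R) (Hnv : is_vector_norm nv)
  (F : 'cV[R]_n -> 'cV[R]_n) (Jp : 'M[R]_n) p h :
  differentiable F p -> (forall v, 'd F p v = Jp *m v) ->
  forall e : R, 0 < e -> exists2 d : R, 0 < d & forall s : R, `|s| < d ->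
    nv (F (p + s *: h) - F p - s *: (Jp *m h)) <= e * `|s|.
Proof.
move=> dF dFE e e0.
have C1 : 0 < Cn nv + 1 by rewrite ltr_wpDl ?Cn_ge0.
have h1 : 0 < `|h| + 1 by rewrite ltr_wpDl.
pose a := e / ((Cn nv + 1) * (`|h| + 1)).
have a0 : 0 < a by rewrite divr_gt0 ?mulr_gt0.
have aE : a * ((Cn nv + 1) * (`|h| + 1)) = e by rewrite divfK // gt_eqF ?mulr_gt0.
have [d0 d0p Hd] := diff_approx dF a a0.
exists (d0 / (`|h| + 1)); first by rewrite divr_gt0.
move=> s hs.
have hsh : `|s *: h| < d0.
  rewrite normrZ; apply: le_lt_trans (_ : `|s| * (`|h| + 1) < _).
    by rewrite ler_wpM2l // lerDl.
  by rewrite -ltr_pdivlMr.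
have := Hd _ hsh; rewrite dFE -scalemxAr normrZ => hr.
apply: le_trans (nv_le_C Hnv _) _.
have Cn0 := Cn_ge0 Hnv.
set r := `|_ - _ - _| in hr *.
have r0 : 0 <= r by rewrite normr_ge0.
have s0 : 0 <= `|s| by rewrite normr_ge0.
have hh0 : 0 <= `|h| by rewrite normr_ge0.
rewrite -aE.
apply: le_trans (_ : Cn nv * (a * (`|s| * `|h|)) <= _); first by rewrite ler_wpM2l.
nra.
Qed.

Section Main.
Variables (R : realType) (n : nat) (Omega : set 'cV[R]_n)
  (F : 'cV[R]_n -> 'cV[R]_n) (J : 'cV[R]_n -> 'M[R]_n)
  (nv : 'cV[R]_n -> R) (K L M : R) (z xk : 'cV[R]_n).
Hypothesis HJ : forall x, Omega x -> has_jacobian F (J x) x.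
Hypothesis Hnv : is_vector_norm nv.
Hypothesis HL : 0 <= L.
Hypothesis HM : 0 <= M.
Hypothesis HK : forall x y, Omega x -> Omega y ->
     [/\ J x \in unitmx,
         induced_norm nv (invmx (J x)) <= K,
         induced_norm nv (J x - J y) <= L * nv (x - y)
       & induced_norm nv (J x) <= M].
Hypothesis Hz : Omega z.
Hypothesis Hxk : Omega xk.
Hypothesis Hseg : forall t : R, 0 <= t <= 1 -> Omega (t *: xk + (1 - t) *: z).

Let p (t : R) := t *: xk + (1 - t) *: z.
Let h := xk - z.

Lemma p_shift t u : p u = p t + (u - t) *: h.
Proof. by apply/matrixP => i j; rewrite /p /h !mxE; ring. Qed.

Lemma seg_approx t : 0 <= t <= 1 -> forall e : R, 0 < e ->
  exists2 d : R, 0 < d & forall u, `|u - t| < d ->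
    nv (F (p u) - F (p t) - (u - t) *: (J (p t) *m h)) <= e * `|u - t|.
Proof.
move=> ht e e0.
have [dF dFE] := HJ (Hseg _ ht).
have [d d0 Hd] := line_approx Hnv h dF dFE e e0.
by exists d => // u hu; rewrite (p_shift t u); apply: Hd.
Qed.

Lemma p_in t : 0 <= t <= 1 -> Omega (p t).
Proof. exact: Hseg. Qed.

Lemma Jlip t : 0 <= t <= 1 ->
  nv ((J (p t) - J xk) *m h) <= L * (1 - t) * nv h ^+ 2.
Proof.
move=> ht; have [_ _ hl _] := HK (@p_in t ht) Hxk.
apply: le_trans (ind_le Hnv _ _) _.
have E : p t - xk = (t - 1) *: h by apply/matrixP => i j; rewrite /p /h !mxE; ring.
have h0 := nv_ge0 Hnv h.
have N1 : `|t - 1| <= 1 - t.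
  by rewrite distrC ger0_norm // subr_ge0; case/andP: ht.
move: hl; rewrite E (nvZ Hnv) => hl.
apply: le_trans (ler_wpM2r h0 hl) _.
apply: le_trans (_ : L * ((1 - t) * nv h) * nv h <= _).
  apply: (ler_wpM2r h0); apply: (ler_wpM2l HL); apply: (ler_wpM2r h0); exact: N1.
by rewrite le_eqVlt; apply/orP; left; apply/eqP; ring.
Qed.

Lemma Jbnd t : 0 <= t <= 1 -> nv (J (p t) *m h) <= M * nv h.
Proof.
move=> ht; have [_ _ _ hm] := HK (@p_in t ht) Hxk.
apply: le_trans (ind_le Hnv _ _) _.
by rewrite ler_wpM2r ?nv_ge0.
Qed.

Lemma p1 : p 1 = xk.
Proof. by rewrite /p subrr scale0r addr0 scale1r. Qed.
Lemma p0 : p 0 = z.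
Proof. by rewrite /p scale0r add0r subr0 scale1r. Qed.

Lemma decomp (B : 'M[R]_n) t u :
  (F (p u) - u *: (B *m h)) - (F (p t) - t *: (B *m h)) =
  (F (p u) - F (p t) - (u - t) *: (J (p t) *m h)) + (u - t) *: ((J (p t) - B) *m h).
Proof.
rewrite mulmxBl; set a := J (p t) *m h; set b := B *m h.
by apply/matrixP => i j; rewrite !mxE; ring.
Qed.

Lemma nv_comb X Y (s : R) : nv (X + s *: Y) <= nv X + `|s| * nv Y.
Proof. by apply: le_trans (nvD Hnv _ _) _; rewrite (nvZ Hnv). Qed.

Lemma newton_rem : nv (F xk - F z - J xk *m h) <= 2^-1 * L * nv h ^+ 2.
Proof.
pose phi t := F (p t) - t *: (J xk *m h).
set N2 := nv h ^+ 2.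
have N20 : 0 <= N2 by rewrite /N2 exprn_ge0 // nv_ge0.
pose psi t := L * N2 * (t - 2^-1 * t ^+ 2).
have := @mvi R _ nv phi psi (nv0 Hnv) (nvD Hnv).
rewrite /phi p1 p0 scale1r scale0r subr0 addrAC.
move=> H; apply: le_trans (H _ _) _; last first.
  by rewrite le_eqVlt; apply/orP; left; apply/eqP; rewrite /psi; field.
- move=> t t0 t1 e e0.
  have ht : 0 <= t <= 1 by apply/andP; split; [exact: ltW | done].
  have [d1 d10 Hd1] := seg_approx t ht e e0.
  exists d1 => // u tu ut u0.
  have sE : `|u - t| = t - u by rewrite ltr0_norm ?opprB // subr_lt0.
  have := Hd1 u ltac:(by rewrite sE ltrBlDr -ltrBlDl).
  rewrite sE => A.
  have B := Jlip t ht.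
  rewrite -opprB decomp (nvN Hnv); apply: le_trans (nv_comb _ _ _) _; rewrite sE.
  rewrite -/N2 in B.
  have tu0 : 0 <= t - u by rewrite subr_ge0 ltW.
  have B' := ler_wpM2l tu0 B.
  have C : (t - u) * (L * (1 - t) * N2) <= psi t - psi u.
    rewrite -subr_ge0 /psi.
    have -> : L * N2 * (t - 2^-1 * t ^+ 2) - L * N2 * (u - 2^-1 * u ^+ 2) -
      (t - u) * (L * (1 - t) * N2) = 2^-1 * (L * N2 * (t - u) ^+ 2) by field.
    by apply: mulr_ge0; [rewrite invr_ge0 ler0n | apply: mulr_ge0; [exact: mulr_ge0 | exact: sqr_ge0]].
  move: C; rewrite /psi; lra.
- move=> t t0 t1 e e0.
  have ht : 0 <= t <= 1 by apply/andP; split => //; exact: ltW.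
  have e20 : 0 < e / 2 by rewrite divr_gt0.
  have [d1 d10 Hd1] := seg_approx t ht (e / 2) e20.
  have LN0 : 0 < L * N2 + 1 by apply: ltr_wpDl; [exact: mulr_ge0 | exact: ltr01].
  exists (Num.min d1 (e / (2 * (L * N2 + 1)))).
    by rewrite lt_min d10 divr_gt0 ?mulr_gt0.
  move=> u tu; rewrite -ltrBlDl lt_min => /andP[ud1 ud2] u1.
  have sE : `|u - t| = u - t by rewrite ger0_norm // subr_ge0 ltW.
  have := Hd1 u ltac:(by rewrite sE).
  rewrite sE => A.
  have B := Jlip t ht.
  rewrite decomp; apply: le_trans (nv_comb _ _ _) _; rewrite sE.
  have ud2' : (u - t) * (2 * (L * N2 + 1)) <= e.
    by rewrite -ler_pdivlMr ?mulr_gt0 // ltW.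
  rewrite -/N2 in B.
  have tu0 : 0 <= u - t by rewrite subr_ge0 ltW.
  have B' := ler_wpM2l tu0 B.
  have D2 := ler_wpM2l tu0 ud2'.
  have C : psi u - psi t = (u - t) * (L * (1 - t) * N2) - 2^-1 * (L * N2 * (u - t) ^+ 2).
    by rewrite /psi; field.
  have sq0 : 0 <= (u - t) ^+ 2 by exact: sqr_ge0.
  have E : L * N2 * (u - t) ^+ 2 <= e * (u - t).
    have : (u - t) ^+ 2 * (L * N2) <= (u - t) ^+ 2 * (L * N2 + 1) by rewrite ler_wpM2l // lerDl.
    move: D2; rewrite expr2; nra.
  move: C E; rewrite /psi; lra.
Qed.

Lemma F_lip : nv (F xk - F z) <= M * nv h.
Proof.
pose phi t := F (p t) - t *: (0 *m h).
pose psi t := M * nv h * t.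
have := @mvi R _ nv phi psi (nv0 Hnv) (nvD Hnv).
rewrite /phi p1 p0 !mul0mx !scaler0 !subr0.
move=> H; apply: le_trans (H _ _) _; last by rewrite /psi mulr1 mulr0 subr0.
- move=> t t0 t1 e e0.
  have ht : 0 <= t <= 1 by apply/andP; split => //; exact: ltW.
  have [d1 d10 Hd1] := seg_approx t ht e e0.
  exists d1 => // u tu; rewrite -ltrBlDl => ud u1.
  have sE : `|u - t| = u - t by rewrite ger0_norm // subr_ge0 ltW.
  have := Hd1 u ltac:(by rewrite sE).
  rewrite sE => A.
  have B := Jbnd t ht.
  rewrite !scaler0 !subr0.
  rewrite -[F (p u) - F (p t)](subrK ((u - t) *: (J (p t) *m h))); apply: le_trans (nv_comb _ _ _) _; rewrite sE.
  have tu0 : 0 <= u - t by rewrite subr_ge0 ltW.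
  have B' := ler_wpM2l tu0 B.
  rewrite /psi; lra.
- move=> t t0 t1 e e0.
  have ht : 0 <= t <= 1 by apply/andP; split; [exact: ltW | done].
  have [d1 d10 Hd1] := seg_approx t ht e e0.
  exists d1 => // u tu ut u0.
  have sE : `|u - t| = t - u by rewrite ltr0_norm ?opprB // subr_lt0.
  have := Hd1 u ltac:(by rewrite sE ltrBlDr -ltrBlDl).
  rewrite sE => A.
  have B := Jbnd t ht.
  rewrite !scaler0 !subr0.
  rewrite -opprB -[F (p u) - F (p t)](subrK ((u - t) *: (J (p t) *m h))) (nvN Hnv); apply: le_trans (nv_comb _ _ _) _; rewrite sE.
  have tu0 : 0 <= t - u by rewrite subr_ge0 ltW.
  have B' := ler_wpM2l tu0 B.
  rewrite /psi; lra.
Qed.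

End Main.

Unset Implicit Arguments.

Theorem theorem1 (R : realType) (n : nat) (Omega : set 'cV[R]_n)
  (F : 'cV[R]_n -> 'cV[R]_n) (J : 'cV[R]_n -> 'M[R]_n)
  (nv : 'cV[R]_n -> R) (K L M : R) (z xk : 'cV[R]_n) (Dk Ek : 'M[R]_n) :
  open Omega ->
  (forall x, Omega x -> has_jacobian F (J x) x) ->
  {within Omega, continuous J} ->
  is_vector_norm nv ->
  0 <= K -> 0 <= L -> 0 <= M ->
  (forall x y, Omega x -> Omega y ->
     [/\ J x \in unitmx,
         induced_norm nv (invmx (J x)) <= K,
         induced_norm nv (J x - J y) <= L * nv (x - y)
       & induced_norm nv (J x) <= M]) ->
  Omega z -> F z = 0 ->
  Omega xk ->
  (forall t : R, 0 <= t <= 1 -> Omega (t *: xk + (1 - t) *: z)) ->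
  is_diag_mx Dk ->
  let g := fun x => x - invmx (J x) *m F x in
  let xk1 := (1%:M + Dk) *m (g xk - Ek *m (invmx (J xk) *m F xk)) in
  xk1 - z = g xk - z - Ek *m (invmx (J xk) *m F xk)
            + Dk *m (g xk - Ek *m (invmx (J xk) *m F xk))
  /\
  nv (xk1 - z) <=
    2^-1 * L * K * nv (xk - z) ^+ 2
    + induced_norm nv Ek * K * M * nv (xk - z)
    + induced_norm nv Dk * (nv z + 2^-1 * L * K * nv (xk - z) ^+ 2
                            + induced_norm nv Ek * K * M * nv (xk - z)).
Proof.
move=> oO HJ cJ Hnv K0 L0 M0 HK Hz Fz Hxk Hseg Dd g xk1.
set q := invmx (J xk) *m F xk.
set w := g xk - Ek *m q.
have idE : xk1 - z = g xk - z - Ek *m q + Dk *m w.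
  rewrite /xk1 mulmxDl mul1mx; set a := Dk *m w.
  by rewrite /w addrAC [g xk - z - _]addrAC.
split => //.
have [Ju Kb _ _] := HK xk xk Hxk Hxk.
set h := xk - z.
have Ga : g xk - z = - (invmx (J xk) *m (F xk - F z - J xk *m h)).
  rewrite Fz subr0 mulmxBr mulKmx // opprB -/q /g /h.
  by rewrite addrAC.
have NR := newton_rem Omega J K L M z xk HJ Hnv L0 HK Hxk Hseg.
have FL := F_lip Omega J K L M z xk HJ Hnv HK Hxk Hseg.
rewrite -/h in NR FL.
set N := nv h.
have N0 : 0 <= N by exact: nv_ge0.
have na : nv (g xk - z) <= K * (2^-1 * L * N ^+ 2).
  rewrite Ga (nvN Hnv); apply: le_trans (ind_le Hnv _ _) _.
  by apply: ler_pM => //; [exact: ind_ge0 | exact: nv_ge0].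
have nq : nv q <= K * (M * N).
  rewrite /q -[F xk](subr0) -Fz; apply: le_trans (ind_le Hnv _ _) _.
  by apply: ler_pM => //; [exact: ind_ge0 | exact: nv_ge0].
set iE := induced_norm nv Ek.
set iD := induced_norm nv Dk.
have iE0 : 0 <= iE by exact: ind_ge0.
have iD0 : 0 <= iD by exact: ind_ge0.
have nEq : nv (Ek *m q) <= iE * (K * (M * N)).
  apply: le_trans (ind_le Hnv _ _) _; exact: ler_wpM2l.
have wE : w = z + (g xk - z) - Ek *m q by rewrite /w (addrC z) subrK.
have nw : nv w <= nv z + nv (g xk - z) + nv (Ek *m q).
  rewrite wE; apply: le_trans (nvB Hnv _ _) _; rewrite lerD2r; exact: nvD.
have nw' : nv w <= nv z + 2^-1 * L * K * N ^+ 2 + iE * K * M * N.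
  apply: le_trans nw _; move: na nEq; lra.
have nDw : nv (Dk *m w) <= iD * (nv z + 2^-1 * L * K * N ^+ 2 + iE * K * M * N).
  apply: le_trans (ind_le Hnv _ _) _; exact: ler_wpM2l.
rewrite idE; apply: le_trans (nvD Hnv _ _) _.
have n1 : nv (g xk - z - Ek *m q) <= nv (g xk - z) + nv (Ek *m q) by exact: nvB.
move: n1 nDw na nEq; lra.
Qed.
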